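(* Let $k,\ell\ge 1$ and let $R=[0,\ell]\times[0,k]$. Consider partially directed walks on $\mathbb Z^2$ (self-avoiding walks using only North $(0,1)$, East $(1,0)$ and South $(0,-1)$ unit steps) that start at $(0,0)$, stay in $R$, and end at $(\ell,k)$. Such a walk is generated by the following random procedure: starting from $(0,0)$, at each time one chooses uniformly at random one of the eligible steps, where a step (N, E or S) is eligible if, once appended to the current walk, it gives a self-avoiding N/E/S walk staying in $R$ that can be extended by N/E/S steps into such a walk ending at $(\ell,k)$; the procedure stops on reaching $(\ell,k)$. Let $p(w_0)$ denote the probability of obtaining the walk $w_0$. Write $w_0=w\,\mathsf E\,\mathsf N\cdots\mathsf N$, i.e. $w$ is the prefix of $w_0$ preceding its last East step (heights measured from the bottom side $y=0$). Then $$\frac1{p(w_0)}=2\cdot 3^{h(w)}\,2^{h_c(w)}\,2^{v(w)}\,1^{v_c(w)},$$ where $h(w)$ is the number of horizontal steps of $w$ lying neither at height $0$ nor at height $k$; $h_c(w)$ is the number of horizontal steps of $w$ lying at height $0$ or $k$; $v(w)$ is the number of vertical steps of $w$ ending neither at height $0$ nor at height $k$; and $v_c(w)$ is the number of vertical steps of $w$ ending at height $0$ or $k$. *)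

(* Defs.v *)
From mathcomp Require Import all_boot all_order all_algebra.
From mathcomp Require Import boolp.
Set Implicit Arguments. Unset Strict Implicit. Unset Printing Implicit Defensive.
Import Order.TTheory GRing.Theory Num.Theory.
Local Open Scope ring_scope.

Inductive step := N | E | S.

Definition is_E (d : step) : bool := if d is E then true else false.

Definition move (p : int * int) (d : step) : int * int :=
  match d with
  | N => (p.1, p.2 + 1)
  | E => (p.1 + 1, p.2)
  | S => (p.1, p.2 - 1)
  end.

Fixpoint trace (p : int * int) (u : seq step) : seq (int * int) :=
  p :: (if u is d :: u' then trace (move p d) u' else [::]).

Definition endpt (u : seq step) : int * int := foldl move (0, 0) u.

Definition in_rect (l k : nat) (p : int * int) : bool :=
  (0 <= p.1 <= l%:Z) && (0 <= p.2 <= k%:Z).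

Definition admissible (l k : nat) (u : seq step) : bool :=
  uniq (trace (0, 0) u) && all (in_rect l k) (trace (0, 0) u).

Definition complete (l k : nat) (u : seq step) : bool :=
  admissible l k u && (endpt u == (l%:Z, k%:Z)).

Definition extendable (l k : nat) (u : seq step) : Prop :=
  exists s : seq step, complete l k (u ++ s).

Definition elig (l k : nat) (u : seq step) : nat :=
  count (fun d => `[< extendable l k (rcons u d) >]) [:: N; E; S].

Definition prob (l k : nat) (w0 : seq step) : rat :=
  \prod_(i < size w0) ((elig l k (take i w0))%:R)^-1.

Definition ystart (w : seq step) (i : nat) : int := (endpt (take i w)).2.
Definition yend (w : seq step) (i : nat) : int := (endpt (take i.+1 w)).2.

Definition on_side (k : nat) (y : int) : bool := (y == 0) || (y == k%:Z).

Definition hcount (k : nat) (w : seq step) : nat :=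
  count (fun i => is_E (nth N w i) && ~~ on_side k (ystart w i)) (iota 0 (size w)).
Definition hccount (k : nat) (w : seq step) : nat :=
  count (fun i => is_E (nth N w i) && on_side k (ystart w i)) (iota 0 (size w)).
Definition vcount (k : nat) (w : seq step) : nat :=
  count (fun i => ~~ is_E (nth N w i) && ~~ on_side k (yend w i)) (iota 0 (size w)).
Definition vccount (k : nat) (w : seq step) : nat :=
  count (fun i => ~~ is_E (nth N w i) && on_side k (yend w i)) (iota 0 (size w)).

(* Main.v *)
Require Import Defs.
From mathcomp Require Import all_boot all_order all_algebra.
From mathcomp Require Import boolp zify ring.
Set Implicit Arguments. Unset Strict Implicit. Unset Printing Implicit Defensive.
Import Order.TTheory GRing.Theory Num.Theory.
Local Open Scope ring_scope.

Lemma trace_cat p u v : trace p (u ++ v) = trace p u ++ behead (trace (foldl move p u) v).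
Proof. elim: u p => [|d u IH] p /=; first by case: v. by rewrite IH. Qed.

Lemma trace_rcons p u d : trace p (rcons u d) = rcons (trace p u) (foldl move p (rcons u d)).
Proof. rewrite -cats1 trace_cat foldl_cat /= cats1. done. Qed.

Lemma trace_head p u : p \in trace p u.
Proof. by case: u => [|d u]; rewrite inE eqxx. Qed.

Lemma trace_last p u : foldl move p u \in trace p u.
Proof. elim: u p => [|d u IH] p /=; first by rewrite inE. by rewrite inE IH orbT. Qed.

Lemma trace_x p u q : q \in trace p u -> p.1 <= q.1 <= (foldl move p u).1.
Proof.
elim: u p q => [|d u IH] p q /=; first by rewrite inE => /eqP ->; lia.
rewrite inE => /orP[/eqP->|H].
- have := IH _ _ (trace_head (move p d) u).
  by case: d => /=; lia.
- have := IH _ _ H. by move: H; case: d => /=; lia.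
Qed.

Definition notS (d : step) : bool := if d is S then false else true.

Lemma trace_ne p t q : all notS t -> q \in trace p t ->
  [/\ p.1 <= q.1, p.2 <= q.2, q.1 <= (foldl move p t).1 & q.2 <= (foldl move p t).2].
Proof.
elim: t p q => [|d t IH] p q /=; first by rewrite inE => _ /eqP ->; split; lia.
move=> /andP[Hd Ht]; rewrite inE => /orP[/eqP->|H].
- have [] := IH _ _ Ht (trace_head (move p d) t).
  by move: Hd; case: d => /= // *; split; lia.
- have [] := IH _ _ Ht H. by move: Hd H; case: d => /= // *; split; lia.
Qed.

Lemma uniq_ne p t : all notS t -> uniq (trace p t).
Proof.
elim: t p => [|d t IH] p //= /andP[Hd Ht]; rewrite IH // andbT.
apply/negP => H; have [] := trace_ne Ht H.
by move: Hd H; case: d => /= // *; lia.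
Qed.

Lemma foldl_nseqN p n : foldl move p (nseq n N) = (p.1, p.2 + n%:Z).
Proof.
elim: n p => [|n IH] [a b] /=; first by rewrite addr0.
rewrite IH /=; congr pair; lia.
Qed.

Lemma foldl_nseqE p n : foldl move p (nseq n E) = (p.1 + n%:Z, p.2).
Proof.
elim: n p => [|n IH] [a b] /=; first by rewrite addr0.
rewrite IH /=; congr pair; lia.
Qed.

Lemma all_notS_nseq n d : notS d -> all notS (nseq n d).
Proof. by move=> Hd; elim: n => //= n ->; rewrite Hd. Qed.

Lemma construct l k u : admissible l k u -> (endpt u).1 < l%:Z ->
  exists t, complete l k (u ++ E :: t).
Proof.
move=> /andP[Hu Hr] Hx.
have /andP[/andP[Hx0 Hx1] /andP[Hy0 Hy1]] := allP Hr _ (trace_last (0,0) u).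
rewrite -/(endpt u) in Hx0 Hx1 Hy0 Hy1.
set e := endpt u in Hx Hx0 Hx1 Hy0 Hy1 *.
exists (nseq (absz (k%:Z - e.2)%R) N ++ nseq (absz (l%:Z - e.1 - 1)%R) E).
set t := nseq _ N ++ _.
have Hne : all notS t by rewrite /t all_cat; apply/andP; split; apply: all_notS_nseq.
have Hend : foldl move (move e E) t = (l%:Z, k%:Z).
  rewrite foldl_cat foldl_nseqN foldl_nseqE /=; congr pair; lia.
rewrite /complete /admissible /endpt foldl_cat -/(endpt u) -/e /= Hend eqxx andbT.
rewrite trace_cat -/(endpt u) -/e /= cat_uniq Hu uniq_ne // andbT all_cat Hr /=.
apply/andP; split.
- apply/hasPn => q Hq; apply/negP => Hq'.
  have [H1 _ _ _] := trace_ne Hne Hq.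
  have := trace_x Hq'. rewrite -/(endpt u) -/e /=. simpl in H1. lia.
- apply/allP => q Hq; have [] := trace_ne Hne Hq.
  rewrite Hend /in_rect /=. lia.
Qed.

Lemma adm_prefix l k u v : admissible l k (u ++ v) -> admissible l k u.
Proof.
rewrite /admissible trace_cat cat_uniq all_cat.
by case/andP => /andP[-> _] /andP[-> _].
Qed.

Lemma ext_adm l k u : extendable l k u -> admissible l k u.
Proof. by case=> s /andP[/adm_prefix]. Qed.

Lemma ext_rcons_E l k u : admissible l k u -> (endpt u).1 < l%:Z ->
  extendable l k (rcons u E).
Proof. by move=> Hu Hx; have [t Ht] := construct Hu Hx; exists t; rewrite cat_rcons. Qed.

Lemma endpt_rcons u d : endpt (rcons u d) = move (endpt u) d.
Proof. by rewrite /endpt foldl_rcons. Qed.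

Lemma trace0_rcons u d : trace (0,0) (rcons u d) = rcons (trace (0,0) u) (move (endpt u) d).
Proof. by rewrite trace_rcons -/(endpt _) endpt_rcons. Qed.

Lemma col_rcons u d q : uniq (trace (0,0) (rcons u d)) ->
  q \in trace (0,0) (rcons u d) -> q.1 = (endpt (rcons u d)).1 ->
  match d with
  | N => q.2 <= (endpt (rcons u d)).2
  | S => (endpt (rcons u d)).2 <= q.2
  | E => q == endpt (rcons u d) end.
Proof.
elim/last_ind: u d q => [|u0 d0 IH] d q.
  by rewrite /endpt /= !inE => _ /orP[/eqP->|/eqP->]; case: d => /= //; lia.
rewrite !endpt_rcons trace0_rcons rcons_uniq mem_rcons inE endpt_rcons => /andP[Hn Hu].
move=> /orP[/eqP->|Hq]; first by case: d {Hn} => /=; rewrite ?lexx ?eqxx.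
have Hx := trace_x Hq; rewrite -/(endpt _) in Hx.
have Hl : endpt u0 \in trace (0,0) (rcons u0 d0).
  by rewrite trace0_rcons mem_rcons inE trace_last orbT.
have := IH d0 q Hu Hq.
move: Hn Hl Hx; rewrite endpt_rcons.
set e1 := endpt u0.
case: d => /= Hn Hl Hx Hq1.
- move: Hu Hq; case: d0 Hn Hl Hx Hq1 => /= Hn Hl Hx Hq1 Hu Hq H1.
  + have := Hq1 H1; lia.
  + move/eqP: (Hq1 H1) => -> /=; lia.
  + exfalso; move/negP: Hn; apply.
    have -> : (e1.1, e1.2 - 1 + 1) = e1 by case: (e1) => a b /=; congr pair; lia.
    done.
- move=> H1; exfalso; lia.
- move: Hu Hq; case: d0 Hn Hl Hx Hq1 => /= Hn Hl Hx Hq1 Hu Hq H1.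
  + exfalso; move/negP: Hn; apply.
    have -> : (e1.1, e1.2 + 1 - 1) = e1 by case: (e1) => a b /=; congr pair; lia.
    done.
  + move/eqP: (Hq1 H1) => -> /=; lia.
  + have := Hq1 H1; lia.
Qed.

Lemma adm_rcons l k u d : admissible l k (rcons u d) =
  [&& admissible l k u, move (endpt u) d \notin trace (0,0) u &
      in_rect l k (move (endpt u) d)].
Proof.
rewrite /admissible trace0_rcons rcons_uniq all_rcons.
by case: (uniq _); case: (_ \notin _); case: (in_rect _ _ _); case: (all _ _).
Qed.

Lemma no_ext l k u : ~~ admissible l k u -> ~ extendable l k u.
Proof. by move=> /negP H /ext_adm. Qed.

Lemma trace0_in_rect l k u (q : int * int) : admissible l k u -> q \in trace (0,0) u ->
  (0 <= q.1 <= l%:Z) && (0 <= q.2 <= k%:Z).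
Proof. by case/andP=> _ /allP H /H. Qed.

Lemma ext_rcons_N l k u : admissible l k u -> (endpt u).1 < l%:Z -> (endpt u).2 < k%:Z ->
  (forall q, q \in trace (0,0) u -> q.1 = (endpt u).1 -> q.2 <= (endpt u).2) ->
  extendable l k (rcons u N).
Proof.
move=> Hu Hx Hy Hc.
have He := trace0_in_rect Hu (trace_last _ _).
have Ha : admissible l k (rcons u N).
  rewrite adm_rcons Hu /= /in_rect /=; apply/andP; split; last by move: He; rewrite -/(endpt u) => /and3P[A1 A2 A3]; apply/and3P; split; lia.
  apply/negP => /Hc /= H; have := H erefl; lia.
have Hx' : (endpt (rcons u N)).1 < l%:Z by rewrite endpt_rcons.
have [t Ht] := construct Ha Hx'.
by exists (E :: t).
Qed.

Lemma ext_rcons_S l k u : admissible l k u -> (endpt u).1 < l%:Z -> 0 < (endpt u).2 ->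
  (forall q, q \in trace (0,0) u -> q.1 = (endpt u).1 -> (endpt u).2 <= q.2) ->
  extendable l k (rcons u S).
Proof.
move=> Hu Hx Hy Hc.
have He := trace0_in_rect Hu (trace_last _ _).
have Ha : admissible l k (rcons u S).
  rewrite adm_rcons Hu /= /in_rect /=; apply/andP; split; last by move: He; rewrite -/(endpt u) => /and3P[A1 A2 A3]; apply/and3P; split; lia.
  apply/negP => /Hc /= H; have := H erefl; lia.
have Hx' : (endpt (rcons u S)).1 < l%:Z by rewrite endpt_rcons.
have [t Ht] := construct Ha Hx'.
by exists (E :: t).
Qed.

Lemma stuck l k s a b : a < b -> b <= k%:Z -> all (in_rect l k) (trace (l%:Z, a) s) ->
  foldl move (l%:Z, a) s = (l%:Z, k%:Z) -> (l%:Z, b) \in trace (l%:Z, a) s.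
Proof.
elim: s a => [|d s IH] a Hab Hb /=.
  by move=> _ [] E1; exfalso; lia.
move=> /andP[_ Hr] Hf; rewrite inE; apply/orP; right.
case: d Hr Hf => /= Hr Hf.
- have [->|Hne] := eqVneq (a + 1) b; first exact: trace_head.
  apply: IH => //; lia.
- exfalso; move: Hr; case: s {IH Hf} => [|d s] /=; rewrite /in_rect /=; lia.
- apply: IH => //; lia.
Qed.

Lemma no_ext_S_col l k u : (endpt u).1 = l%:Z -> ~ extendable l k (rcons u S).
Proof.
move=> Hx [s /andP[/andP[Hu Hr] /eqP He]].
move: Hu Hr He; rewrite -cats1 -catA /= /endpt foldl_cat trace_cat -/(endpt u) /=.
set e := endpt u in Hx *.
rewrite cat_uniq all_cat => /and3P[_ Hn _] /andP[Hr0 Hr].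
rewrite Hx in Hn Hr * => Hf.
have /andP[_ /andP[Hy0 Hy1]] := allP Hr0 _ (trace_last _ _).
rewrite -/(endpt u) -/e /= in Hy0 Hy1.
have Hlt : e.2 - 1 < e.2 by lia.
have Hin := stuck Hlt Hy1 Hr Hf.
move/hasPn: Hn => /(_ _ Hin); rewrite -Hx.
have -> : (e.1, e.2) = e by case: (e).
by rewrite trace_last.
Qed.

Definition notN (d : step) : bool := if d is N then false else true.

Lemma eligE l k v : elig l k v =
  (`[< extendable l k (rcons v N) >] + `[< extendable l k (rcons v E) >]
   + `[< extendable l k (rcons v S) >])%N.
Proof. by rewrite /elig /= addn0 addnA. Qed.

Lemma asbool_eq (P : Prop) (b : bool) : (P <-> b) -> `[< P >] = b.
Proof. by move=> H; case: b H => H; [rewrite asboolT // H | rewrite asboolF // H]. Qed.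

Lemma extN_rcons l k u d : admissible l k (rcons u d) ->
  (endpt (rcons u d)).1 < l%:Z ->
  `[< extendable l k (rcons (rcons u d) N) >] =
    notS d && ((endpt (rcons u d)).2 < k%:Z).
Proof.
move=> Hv Hx; apply: asbool_eq; split.
- move=> /ext_adm; rewrite adm_rcons => /and3P[_ Hn Hr].
  apply/andP; split.
    case: d Hv Hx Hn {Hr} => // Hv Hx; rewrite trace0_rcons mem_rcons inE negb_or.
    case/andP=> _ /negP H; exfalso; apply: H; rewrite endpt_rcons /=.
    have -> : ((endpt u).1, (endpt u).2 - 1 + 1) = endpt u by case: (endpt u) => a b /=; congr pair; lia.
    exact: trace_last.
  by move: Hr; rewrite /in_rect /=; lia.
- case/andP=> Hd Hy; apply: ext_rcons_N => // q Hq Hq1.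
  have := col_rcons (proj1 (andP Hv)) Hq Hq1.
  case: d Hd {Hv Hx Hy Hq Hq1} => //= _. all: by [ | move/eqP ->].
Qed.

Lemma extS_rcons l k u d : admissible l k (rcons u d) ->
  (endpt (rcons u d)).1 < l%:Z ->
  `[< extendable l k (rcons (rcons u d) S) >] =
    notN d && (0 < (endpt (rcons u d)).2).
Proof.
move=> Hv Hx; apply: asbool_eq; split.
- move=> /ext_adm; rewrite adm_rcons => /and3P[_ Hn Hr].
  apply/andP; split.
    case: d Hv Hx Hn {Hr} => // Hv Hx; rewrite trace0_rcons mem_rcons inE negb_or.
    case/andP=> _ /negP H; exfalso; apply: H; rewrite endpt_rcons /=.
    have -> : ((endpt u).1, (endpt u).2 + 1 - 1) = endpt u by case: (endpt u) => a b /=; congr pair; lia.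
    exact: trace_last.
  by move: Hr; rewrite /in_rect /=; lia.
- case/andP=> Hd Hy; apply: ext_rcons_S => // q Hq Hq1.
  have := col_rcons (proj1 (andP Hv)) Hq Hq1.
  case: d Hd {Hv Hx Hy Hq Hq1} => //= _. all: by [ | move/eqP ->].
Qed.

Lemma elig_rcons l k u d : admissible l k (rcons u d) ->
  (endpt (rcons u d)).1 < l%:Z ->
  elig l k (rcons u d) = 
   (notS d && ((endpt (rcons u d)).2 < k%:Z)%R + 1 + 
    notN d && (0 < (endpt (rcons u d)).2)%R)%N.
Proof.
move=> Hv Hx; rewrite eligE extN_rcons // extS_rcons // asboolT //.
exact: ext_rcons_E.
Qed.

Lemma elig_nil l k : (1 <= l)%N -> (1 <= k)%N -> elig l k [::] = 2%N.
Proof.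
move=> Hl Hk.
have Ha : admissible l k [::] by rewrite /admissible /= /in_rect /=; lia.
rewrite eligE asboolT; last first.
  apply: ext_rcons_N => //=.
  by move=> q; rewrite inE => /eqP -> /=.
rewrite asboolT; last by apply: ext_rcons_E => //; rewrite /endpt /=; lia.
rewrite asboolF //; apply: no_ext; rewrite adm_rcons /= /in_rect /=.
by rewrite /endpt.
Qed.

Lemma elig_col l k u : admissible l k u -> (endpt u).1 = l%:Z ->
  extendable l k (rcons u N) -> elig l k u = 1%N.
Proof.
move=> Hu Hx HN; rewrite eligE (asboolT HN) asboolF; last first.
  by apply: no_ext; rewrite adm_rcons /in_rect /= Hx; apply/negP => /and3P[_ _ /andP[/andP[_]]]; lia.
by rewrite asboolF //; apply: no_ext_S_col.
Qed.
Lemma prod_count (s : seq nat) (A B C D : pred nat) :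
  (\prod_(i <- s) (3 ^ A i * 2 ^ B i * 2 ^ C i * 1 ^ D i) =
   3 ^ count A s * 2 ^ count B s * 2 ^ count C s * 1 ^ count D s)%N.
Proof.
elim: s => [|x s IH]; first by rewrite big_nil.
rewrite big_cons IH /= !expnD. ring.
Qed.

Lemma factE (y : int) (k : nat) : (1 <= k)%N -> 0 <= y <= k%:Z ->
  ((y < k%:Z)%R + 1 + (0 < y)%R)%N = (3 ^ (~~ ((y == 0) || (y == k%:Z))) * 2 ^ ((y == 0) || (y == k%:Z)))%N.
Proof.
move=> Hk Hy.
have [->|H0] := eqVneq y 0.
  by rewrite ltxx ?eqxx /= (_ : (0 < k%:Z) = true) //; lia.
rewrite ?(negbTE H0) /=.
have [->|Hk'] := eqVneq y k%:Z.
  by rewrite ltxx ?eqxx ?orbT /= (_ : (0 < k%:Z) = true) //; lia.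
rewrite (_ : (y < k%:Z) = true); last by lia.
by rewrite (_ : (0 < y) = true) /= -?(negbTE Hk') //; lia.
Qed.

Lemma factN (y : int) (k : nat) : (1 <= y <= k%:Z) ->
  ((y < k%:Z)%R + 1)%N = (2 ^ (~~ ((y == 0) || (y == k%:Z))) * 1 ^ ((y == 0) || (y == k%:Z)))%N.
Proof.
move=> Hy; rewrite exp1n muln1 (_ : (y == 0) = false); last by apply/eqP; lia.
have [->|Hk'] := eqVneq y k%:Z; first by rewrite ltxx.
by rewrite ?(negbTE Hk') /= (_ : (y < k%:Z) = true) //; lia.
Qed.

Lemma factS (y : int) (k : nat) : (0 <= y < k%:Z) ->
  ((0 < y)%R + 1)%N = (2 ^ (~~ ((y == 0) || (y == k%:Z))) * 1 ^ ((y == 0) || (y == k%:Z)))%N.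
Proof.
move=> Hy; rewrite exp1n muln1 (_ : (y == k%:Z) = false) ?orbF; last by apply/eqP; lia.
have [->|H0] := eqVneq y 0; first by rewrite ltxx.
by rewrite ?(negbTE H0) /= (_ : (0 < y) = true) //; lia.
Qed.

Lemma endpt_cat_x u v : (endpt u).1 <= (endpt (u ++ v)).1.
Proof.
rewrite /endpt foldl_cat.
by case/andP: (trace_x (trace_head (foldl move (0,0) u) v)).
Qed.

Lemma ext_take l k w0 i : complete l k w0 -> extendable l k (take i w0).
Proof. by move=> H; exists (drop i w0); rewrite cat_take_drop. Qed.

Theorem lemma2p1 (l k : nat) (w0 w : seq step) (n : nat) :
  (1 <= l)%N -> (1 <= k)%N -> complete l k w0 ->
  w0 = w ++ E :: nseq n N ->
  (prob l k w0)^-1 =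
    (2 * 3 ^ hcount k w * 2 ^ hccount k w * 2 ^ vcount k w * 1 ^ vccount k w)%N%:R.
Proof.
move=> Hl Hk Hc Hw0.
have Hend : endpt w0 = (l%:Z, k%:Z) by case/andP: Hc => _ /eqP.
have [Hew1 Hew2] : (endpt w).1 + 1 = l%:Z /\ (endpt w).2 + n%:Z = k%:Z.
  move: Hend; rewrite Hw0 /endpt foldl_cat /= foldl_nseqN /=.
  by case=> <- <-.
have Hs : size w0 = (size w + n).+1 by rewrite Hw0 size_cat /= size_nseq addnS.
rewrite /prob prodfV invrK -natr_prod; congr (_%:R).
rewrite -(big_mkord xpredT (fun i => elig l k (take i w0))) Hs big_nat_recl //.
rewrite (big_cat_nat _ (n := size w)) ?leq_addr //=.
rewrite [X in (_ * (_ * X))%N]big1_seq ?muln1; last first.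
  move=> i /andP[_]; rewrite mem_index_iota => /andP[Hi1 Hi2].
  have Ht : take i.+1 w0 = rcons w E ++ take (i - size w) (nseq n N).
    rewrite Hw0 take_cat ltnNge (leqW Hi1) /= subSn //= cat_rcons //.
  apply: elig_col.
  - exact: ext_adm (ext_take _ Hc).
  - have H1 := endpt_cat_x (rcons w E) (take (i - size w) (nseq n N)).
    have H2 := endpt_cat_x (take i.+1 w0) (drop i.+1 w0).
    rewrite cat_take_drop Hend /= in H2.
    rewrite -Ht endpt_rcons /= in H1.
    lia.
  - have Hlt : (i.+1 < size w0)%N by rewrite Hs ltnS.
    rewrite -[X in extendable _ _ (rcons _ X)](_ : nth N w0 i.+1 = N).
      by rewrite -take_nth //; apply: ext_take.
    by rewrite Hw0 nth_cat ltnNge (leqW Hi1) /= subSn //= nth_nseq if_same.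
rewrite take0 elig_nil // -!mulnA; congr (_ * _)%N; rewrite !mulnA.
rewrite /index_iota subn0 /hcount /hccount /vcount /vccount -prod_count.
apply: eq_big_seq => i; rewrite mem_iota add0n => /andP[_ Hi].
have Ht : take i.+1 w0 = rcons (take i w) (nth N w i).
  by rewrite Hw0 takel_cat // (take_nth N Hi).
have Hadm : admissible l k (rcons (take i w) (nth N w i)).
  by rewrite -Ht; exact: ext_adm (ext_take _ Hc).
have Hx : (endpt (rcons (take i w) (nth N w i))).1 < l%:Z.
  have := endpt_cat_x (take i.+1 w) (drop i.+1 w).
  rewrite cat_take_drop (take_nth N Hi); lia.
rewrite Ht elig_rcons //.
have Hy := trace0_in_rect Hadm (trace_last _ _).
have Hadm' : admissible l k (take i w) by apply: (adm_prefix (v := [:: nth N w i])); rewrite cats1.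
have Hys := trace0_in_rect Hadm' (trace_last _ _).
rewrite -/(endpt _) in Hy Hys.
rewrite /ystart /yend (take_nth N Hi) endpt_rcons in Hy *.
rewrite -/(endpt (take i w)) in Hys.
set e := endpt (take i w) in Hy Hys *.
move: Hy Hys => /and3P[A1 A2 A3] /and3P[B1 B2 B3].
rewrite /on_side; case: (nth N w i) A1 A2 A3 => /= A1 A2 A3.
- rewrite addn0 expn0 !mul1n; apply: factN; lia.
- rewrite expn0 !muln1; apply: factE => //; lia.
- rewrite add0n addnC expn0 !mul1n; apply: factS; lia.
Qed.
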